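(* Let $T>0$. The map $G$ defined by $G(X)_t=\tau_tX_t$, $t\in[0,T]$, is continuous from $\mathcal{C}([0,T],\mathcal{S}')$ into itself.
   Context: $\mathcal{S}$ is the Schwartz space on $\mathbb{R}$ (smooth functions with the topology of the semi-norms $\sup_x|x^\beta\phi^{(\gamma)}(x)|$), $\mathcal{S}'$ its dual, the space of tempered distributions, with duality $\langle\mu,\phi\rangle$. For $x\in\mathbb{R}$ and $\mu\in\mathcal{S}'$, $\tau_x\mu$ is the tempered distribution with $\langle\tau_x\mu,\phi\rangle=\langle\mu,\tau_x\phi\rangle$, where $\tau_x\phi(\cdot)=\phi(\cdot-x)$. A path $X:[0,T]\to\mathcal{S}'$ belongs to $\mathcal{C}([0,T],\mathcal{S}')$ (resp. $\mathcal{D}([0,T],\mathcal{S}')$) iff $t\mapsto\langle X_t,\phi\rangle$ is continuous (resp. right-continuous with left limits) for every $\phi\in\mathcal{S}$; these spaces carry their usual (uniform, resp. Skorokhod) topologies. *)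

(* Defs.v *)
From HB Require Import structures.
From mathcomp Require Import all_boot all_order all_algebra.
From mathcomp Require Import all_classical all_reals all_analysis.
Set Implicit Arguments. Unset Strict Implicit. Unset Printing Implicit Defensive.
Import Order.TTheory GRing.Theory Num.Theory.
Import numFieldNormedType.Exports.
Local Open Scope classical_set_scope.
Local Open Scope ring_scope.

Section Schwartz.
Variable R : realType.

Definition smooth (phi : R -> R) : Prop :=
  forall (n : nat) (x : R), derivable (derive1n n phi) x 1.

Definition schwartz (phi : R -> R) : Prop :=
  smooth phi /\
  forall b g : nat, exists C : R, forall x : R,
      `| x ^+ b * derive1n g phi x | <= C.

(* tempered distributions: functionals on functions, only their values on
   Schwartz functions matter; linear on S and continuous for the
   semi-norm topology of S (i.e. |mu phi| <= C * max_{b,g<=N} p_{b,g}(phi)) *)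
Definition tempered (mu : (R -> R) -> R) : Prop :=
  (forall (a : R) (phi psi : R -> R), schwartz phi -> schwartz psi ->
      mu (fun x => a * phi x + psi x) = a * mu phi + mu psi) /\
  exists (N : nat) (C : R), forall phi : R -> R, schwartz phi ->
    forall M : R,
      (forall (b g : nat) (x : R), (b <= N)%N -> (g <= N)%N ->
          `| x ^+ b * derive1n g phi x | <= M) ->
      `| mu phi | <= C * M.

Definition S_bounded (B : set (R -> R)) : Prop :=
  B `<=` schwartz /\
  forall b g : nat, exists C : R, forall phi, B phi -> forall x : R,
      `| x ^+ b * derive1n g phi x | <= C.

Definition tau_fun (x : R) (phi : R -> R) : R -> R := fun y => phi (y - x).
Definition tau (x : R) (mu : (R -> R) -> R) : (R -> R) -> R :=
  fun phi => mu (tau_fun x phi).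

(* paths [0,T] -> S' (represented as functions R -> S', only [0,T] matters) *)
Definition path_C (T : R) (X : R -> (R -> R) -> R) : Prop :=
  (forall t, t \in `[0, T] -> tempered (X t)) /\
  forall phi, schwartz phi ->
    {within `[0, T], continuous (fun t => X t phi)}.

Definition G (X : R -> (R -> R) -> R) : R -> (R -> R) -> R :=
  fun t => tau t (X t).

(* continuity of a map F : C([0,T],S') -> C([0,T],S') for the uniform topology
   (uniform convergence on [0,T] w.r.t. the strong topology of S', whose
   semi-norms are sup_{phi in B} |<mu,phi>|, B bounded in S), unfolded at
   every point X, using the directed family of semi-norms
   sup_{t in [0,T]} sup_{phi in B} |<X_t,phi>|. *)
Definition continuous_C (T : R)
    (F : (R -> (R -> R) -> R) -> (R -> (R -> R) -> R)) : Prop :=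
  forall X, path_C T X ->
  forall (B : set (R -> R)) (eps : R), S_bounded B -> 0 < eps ->
  exists (B' : set (R -> R)) (delta : R), S_bounded B' /\ 0 < delta /\
    forall Y, path_C T Y ->
      (forall t phi, t \in `[0, T] -> B' phi -> `| Y t phi - X t phi | <= delta) ->
      (forall t phi, t \in `[0, T] -> B phi -> `| F Y t phi - F X t phi | <= eps).

End Schwartz.

(* Main.v *)
Require Import Defs.
From HB Require Import structures.
From mathcomp Require Import all_boot all_order all_algebra.
From mathcomp Require Import all_classical all_reals all_analysis.
Set Implicit Arguments. Unset Strict Implicit. Unset Printing Implicit Defensive.
Import Order.TTheory GRing.Theory Num.Theory.
Import numFieldNormedType.Exports.
Local Open Scope classical_set_scope.
Local Open Scope ring_scope.
From mathcomp Require Import ring lra.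
Section P1.
Variable R : realType.
Implicit Types (f g : R -> R).

Lemma derive1_shiftfun f (t x : R) :
  derive1 (fun y => f (y - t)) x = derive1 f (x - t).
Proof.
rewrite /derive1.
have -> : (fun h : R => h^-1 *: (f (h + x - t) - f (x - t))) =
          (fun h : R => h^-1 *: (f (h + (x - t)) - f (x - t))).
  by apply/funext => h; rewrite addrA.
by [].
Qed.

Lemma derivable_shiftfun f (t x : R) :
  derivable f (x - t) 1 -> derivable (fun y => f (y - t)) x 1.
Proof.
rewrite /derivable /=.
have -> : (fun h : R => h^-1 *: (f (h *: 1 + x - t) - f (x - t))) =
          (fun h : R => h^-1 *: (f (h *: 1 + (x - t)) - f (x - t))).
  by apply/funext => h; rewrite addrA.
by [].
Qed.

Lemma derive1n_shiftfun f (t : R) n :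
  derive1n n (fun y => f (y - t)) = fun y => derive1n n f (y - t).
Proof.
elim: n => // n IH; rewrite derive1nS IH; apply/funext => x.
by rewrite derive1_shiftfun derive1nS.
Qed.

Lemma smooth_shift f (t : R) : smooth f -> smooth (fun y => f (y - t)).
Proof.
move=> sf n x; rewrite derive1n_shiftfun.
exact: (derivable_shiftfun (f := derive1n n f)).
Qed.
End P1.
Section P2.
Variable R : realType.
Implicit Types (f g : R -> R).

Lemma derive1_lin (a : R) f g x : derivable f x 1 -> derivable g x 1 ->
  derive1 (fun y => a * f y + g y) x = a * derive1 f x + derive1 g x.
Proof.
move=> df dg.
have -> : (fun y => a * f y + g y) = a *: f + g by apply/funext.
rewrite !derive1E deriveD ?deriveZ //; exact: derivableZ.
Qed.

Lemma derivable_lin (a : R) f g x : derivable f x 1 -> derivable g x 1 ->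
  derivable (fun y => a * f y + g y) x 1.
Proof.
move=> df dg.
have -> : (fun y => a * f y + g y) = a *: f + g by apply/funext.
apply: derivableD => //; exact: derivableZ.
Qed.

Lemma derive1n_lin (a : R) f g n : smooth f -> smooth g ->
  derive1n n (fun y => a * f y + g y) =
  fun y => a * derive1n n f y + derive1n n g y.
Proof.
move=> sf sg; elim: n => // n IH; rewrite derive1nS IH; apply/funext => x.
by rewrite derive1_lin ?derive1nS.
Qed.

Lemma smooth_lin (a : R) f g : smooth f -> smooth g ->
  smooth (fun y => a * f y + g y).
Proof.
move=> sf sg n x; rewrite derive1n_lin //; exact: derivable_lin.
Qed.

Lemma derive1n_zero n : derive1n n (fun _ : R => (0:R)) = fun _ => 0.
Proof.
elim: n => // n IH; rewrite derive1nS IH; apply/funext => x.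
exact: (derive1_cst (0:R)).
Qed.

Lemma smooth_zero : smooth (fun _ : R => (0:R)).
Proof. move=> n x; rewrite derive1n_zero; exact: (derivable_cst (0:R)). Qed.

Lemma schwartz_zero : schwartz (fun _ : R => (0:R)).
Proof.
split; first exact: smooth_zero.
by move=> b g; exists 0 => x; rewrite derive1n_zero mulr0 normr0.
Qed.

End P2.
Section P3.
Variable R : realType.
Implicit Types (f g : R -> R).

Lemma pow_shift_le (x t : R) b :
  `|x| ^+ b <= (1 + `|t|) ^+ b * (1 + `|x - t| ^+ b).
Proof.
have hx : `|x| <= `|x - t| + `|t|.
  by have := ler_normD (x - t) t; rewrite subrK.
have h1 : 0 <= 1 + `|t| by rewrite addr_ge0.
have [y1|y1] := lerP `|x - t| 1.
- apply: (@le_trans _ _ ((1 + `|t|) ^+ b)).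
    apply: lerXn2r; rewrite ?nnegrE //.
    by apply: le_trans hx _; rewrite lerD2r.
  rewrite -{1}(mulr1 ((1 + `|t|) ^+ b)); apply: ler_wpM2l; first exact: exprn_ge0.
  by rewrite lerDl exprn_ge0.
- apply: (@le_trans _ _ ((1 + `|t|) ^+ b * `|x - t| ^+ b)).
    rewrite -exprMn; apply: lerXn2r; rewrite ?nnegrE ?mulr_ge0 //.
    apply: le_trans hx _; rewrite mulrDl mul1r lerD2l.
    by rewrite -{1}(mulr1 `|t|) ler_wpM2l // ltW.
  by apply: ler_wpM2l; [exact: exprn_ge0|rewrite lerDr].
Qed.

Lemma pow_shift_mul_le (x t v : R) b :
  `|x ^+ b * v| <= (1 + `|t|) ^+ b * (`|v| + `|(x - t) ^+ b * v|).
Proof.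
rewrite !normrM !normrX.
apply: (@le_trans _ _ ((1 + `|t|) ^+ b * (1 + `|x - t| ^+ b) * `|v|)).
  by apply: ler_wpM2r => //; exact: pow_shift_le.
by rewrite -mulrA mulrDl mul1r.
Qed.

End P3.
Section P4.
Variable R : realType.
Implicit Types (f g : R -> R).

Definition PB (N : nat) f (M : R) : Prop :=
  forall (b g : nat) (x : R), (b <= N)%N -> (g <= N)%N ->
    `| x ^+ b * derive1n g f x | <= M.

Lemma PB_ge0 N f M : PB N f M -> 0 <= M.
Proof. move=> h; exact: le_trans (h 0%N 0%N 0 isT isT). Qed.

Lemma schwartz_smooth f : schwartz f -> smooth f.
Proof. by case. Qed.

Lemma schwartz_lin (a : R) f g : schwartz f -> schwartz g ->
  schwartz (fun y => a * f y + g y).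
Proof.
move=> [sf bf] [sg bg]; split; first exact: smooth_lin.
move=> b n; have [C1 h1] := bf b n; have [C2 h2] := bg b n.
exists (`|a| * C1 + C2) => x; rewrite derive1n_lin // mulrDr.
apply: le_trans (ler_normD _ _) _; apply: lerD => //.
by rewrite mulrCA normrM ler_wpM2l.
Qed.

Lemma schwartz_shift f (t : R) : schwartz f -> schwartz (fun y => f (y - t)).
Proof.
move=> [sf bf]; split; first exact: smooth_shift.
move=> b n; have [C1 h1] := bf 0%N n; have [C2 h2] := bf b n.
exists ((1 + `|t|) ^+ b * (C1 + C2)) => x; rewrite derive1n_shiftfun.
apply: le_trans (pow_shift_mul_le _ t _ _) _.
apply: ler_wpM2l; first by rewrite exprn_ge0 // addr_ge0.
apply: lerD; last exact: h2.
by have := h1 (x - t); rewrite expr0 mul1r.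
Qed.

Lemma PB_shift N f M (t : R) : smooth f -> PB N f M ->
  PB N (fun y => f (y - t)) ((1 + `|t|) ^+ N * (M + M)).
Proof.
move=> sf h b n x hb hn; rewrite derive1n_shiftfun.
have M0 := PB_ge0 h.
apply: le_trans (pow_shift_mul_le _ t _ _) _.
apply: ler_pM; first by rewrite exprn_ge0 // addr_ge0.
- by rewrite addr_ge0.
- by apply: ler_weXn2l => //; rewrite lerDl.
apply: lerD; last exact: h.
by have := h 0%N n (x - t) isT hn; rewrite expr0 mul1r.
Qed.

Lemma PB_mono N N' f M M' : (N' <= N)%N -> M <= M' -> PB N f M -> PB N' f M'.
Proof.
move=> hN hM h b n x hb hn; apply: le_trans hM.
by apply: h; apply: leq_trans hN.
Qed.

Lemma PB_scale N f M (c : R) : smooth f -> PB N f M ->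
  PB N (fun y => c * f y) (`|c| * M).
Proof.
move=> sf h b n x hb hn.
have -> : (fun y => c * f y) = (fun y => c * f y + (fun _ => 0) y).
  by apply/funext => y; rewrite addr0.
rewrite derive1n_lin //; last exact: smooth_zero.
rewrite derive1n_zero addr0 mulrCA normrM ler_wpM2l //; exact: h.
Qed.

End P4.
Section P5.
Variable R : realType.
Implicit Types (u beta : nat -> R).

Lemma abs_cvg u beta : (forall n, `|u n| <= beta n) -> cvgn (series beta) ->
  cvgn (series u).
Proof.
move=> h cb; apply: (@normed_cvg _ R^o).
apply: (@series_le_cvg _ _ beta) => //= n.
exact: le_trans (h n).
Qed.

Lemma abs_lim_le u beta : (forall n, `|u n| <= beta n) -> cvgn (series beta) ->
  `|limn (series u)| <= limn (series beta).
Proof.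
move=> h cb.
have cn : cvgn [normed series u].
  apply: (@series_le_cvg _ _ beta) => //= n; exact: le_trans (h n).
apply: le_trans (@lim_series_norm _ R^o u cn) _.
exact: lim_series_le.
Qed.

Lemma series_shift_eq u m n :
  series u (n + m)%N = series u m + series (fun k => u (k + m)%N) n.
Proof.
rewrite series_addn; congr (_ + _).
rewrite /series /= (big_addn 0 _ m) addnK.
by apply: eq_bigr => i _.
Qed.

Lemma series_shift u m : cvgn (series u) ->
  cvgn (series (fun k => u (k + m)%N)) /\
  limn (series u) = series u m + limn (series (fun k => u (k + m)%N)).
Proof.
move=> cu.
have e : series (fun k => u (k + m)%N) = fun n => series u (n + m)%N - series u m.
  by apply/funext => n; rewrite series_shift_eq addrC addKr.
have c2 : series (fun k => u (k + m)%N) @ \oo --> limn (series u) - series u m.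
  rewrite e; apply: cvgB; last exact: cvg_cst.
  by rewrite (@cvg_shiftn m _ (series u)).
split; first by apply/cvg_ex; eexists; exact: c2.
by rewrite (cvg_lim _ c2) // addrC subrK.
Qed.

Lemma series_unshift u m : cvgn (series (fun k => u (k + m)%N)) ->
  cvgn (series u).
Proof.
move=> c.
have e : (fun n => series u (n + m)%N) =
   fun n => series u m + series (fun k => u (k + m)%N) n.
  by apply/funext => n; rewrite series_shift_eq.
apply/cvg_ex; exists (series u m + limn (series (fun k => u (k + m)%N))).
rewrite -(@cvg_shiftn m _ (series u)) /=.
rewrite e; apply: cvgD; [exact: cvg_cst|exact: c].
Qed.

Lemma series_tail_small beta (e : R) : cvgn (series beta) -> 0 < e ->
  exists m, `|limn (series (fun k => beta (k + m)%N))| <= e.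
Proof.
move=> cb e0.
have /cvgrPdist_le /(_ e e0) [M _ HM] := cb.
exists M; have [_ E] := series_shift M cb.
have -> : limn (series (fun k => beta (k + M)%N)) = limn (series beta) - series beta M.
  by rewrite E addrC addKr.
exact: (HM M (leqnn M)).
Qed.

Lemma series_eventually u beta m : (forall n, (m <= n)%N -> u n = beta n) ->
  cvgn (series beta) -> cvgn (series u).
Proof.
move=> h cb; apply: (@series_unshift _ m).
have [c _] := series_shift m cb.
have -> : (fun k => u (k + m)%N) = (fun k => beta (k + m)%N).
  by apply/funext => k; rewrite h // leq_addl.
exact: c.
Qed.

End P5.
Section P6.
Variable R : realType.
Implicit Types (f g : R -> R).

Lemma bridge1 f (x : R) : derivable f x 1 ->
  (fun h => h^-1 * (f (h + x) - f x)) @ 0^' --> derive1 f x.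
Proof.
move=> df; rewrite /derive1.
have E : (fun h : R => h^-1 *: ((f \o shift x) (h *: 1) - f x)) =
         (fun h : R => h^-1 * (f (h + x) - f x)).
  by apply/funext => h /=; rewrite [h *: 1]mulr1.
have := df; rewrite /derivable E => df'.
exact: df'.
Qed.

Lemma bridge2 f (x l : R) :
  (fun h => h^-1 * (f (h + x) - f x)) @ 0^' --> l ->
  derivable f x 1 /\ derive1 f x = l.
Proof.
move=> c.
have E : (fun h : R => h^-1 *: ((f \o shift x) (h *: 1) - f x)) =
         (fun h : R => h^-1 * (f (h + x) - f x)).
  by apply/funext => h /=; rewrite [h *: 1]mulr1.
split; first by rewrite /derivable E; apply/cvg_ex; exists l.
by rewrite /derive1; apply: cvg_lim.
Qed.

Lemma is_derive_derive1 f (x : R) : derivable f x 1 ->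
  is_derive x 1 f (derive1 f x).
Proof. by move=> df; rewrite derive1E; apply: derivableP. Qed.

Lemma mvt_bound f (a b c : R) : (forall y, derivable f y 1) ->
  (forall y, `|derive1 f y| <= c) -> `|f b - f a| <= c * `|b - a|.
Proof.
move=> df hc.
wlog ab : a b / a <= b.
  move=> W; have [/W//|/ltW ba] := leP a b.
  by rewrite distrC (distrC b); apply: W.
have [z _ ->] := @MVT_segment R f (derive1 f) a b ab
  (fun z _ => is_derive_derive1 (df z))
  (derivable_within_continuous (fun z _ => df z)).
by rewrite normrM ler_wpM2r.
Qed.

Lemma lim_series_comb (a b c : nat -> R) (k : R) :
  cvgn (series a) -> cvgn (series b) -> cvgn (series c) ->
  limn (series (fun n => k * (a n - b n) - c n)) =
  k * (limn (series a) - limn (series b)) - limn (series c).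
Proof.
move=> ca cb cc.
have -> : (fun n => k * (a n - b n) - c n) = k *: (a - b) - c by [].
have cab : cvgn (series (a - b)) by exact: is_cvg_seriesB.
have ckab : cvgn (series (k *: (a - b))) by exact: is_cvg_seriesZ.
by rewrite lim_seriesB // lim_seriesZ // lim_seriesB.
Qed.

Lemma series_derive (v : nat -> R -> R) (al ga : nat -> R) (x : R) :
  (forall n y, derivable (v n) y 1) ->
  (forall n y, `|v n y| <= al n) ->
  (forall n y, `|derive1 (v n) y| <= ga n) ->
  cvgn (series al) -> cvgn (series ga) ->
  derivable (fun y => limn (series (fun n => v n y))) x 1 /\
  derive1 (fun y => limn (series (fun n => v n y))) x =
    limn (series (fun n => derive1 (v n) x)).
Proof.
move=> dv hal hga cal cga; apply: bridge2.
set W := limn (series (fun n => derive1 (v n) x)).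
pose d h n := h^-1 * (v n (h + x) - v n x) - derive1 (v n) x.
have cvv y : cvgn (series (fun n => v n y)).
  by apply: (abs_cvg (beta := al)).
have cvd : cvgn (series (fun n => derive1 (v n) x)).
  by apply: (abs_cvg (beta := ga)).
have dbound h n : `|d h n| <= ga n + ga n.
  rewrite /d; apply: le_trans (ler_normB _ _) _; apply: lerD => //.
  rewrite normrM; have [->|h0] := eqVneq h 0.
    by rewrite invr0 normr0 mul0r (le_trans _ (hga n x)).
  have mb := mvt_bound x (h + x) (dv n) (hga n).
  rewrite addrK in mb.
  apply: le_trans (ler_wpM2l (normr_ge0 _) mb) _.
  by rewrite mulrCA -normrM mulVf // normr1 mulr1.
have c2 : cvgn (series (fun n => ga n + ga n)).
  exact: (is_cvg_seriesD cga cga).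
have fin m : (fun h => series (d h) m) @ 0^' --> (0:R).
  elim: m => [|m IH].
    have -> : (fun h => series (d h) 0) = fun _ => 0.
      by apply/funext => h; rewrite /series /= big_geq.
    exact: cvg_cst.
  have -> : (fun h => series (d h) m.+1) = fun h => series (d h) m + d h m.
    by apply/funext => h; rewrite seriesSr.
  have H1 : (fun h => d h m) @ 0^' --> derive1 (v m) x - derive1 (v m) x.
    by apply: cvgB; [exact: bridge1|exact: cvg_cst].
  rewrite subrr in H1.
  have H2 := cvgD IH H1.
  rewrite addr0 in H2; exact: H2.
apply/cvgrPdist_le => e e0.
have e40 : 0 < e / 2 / 2 by rewrite !divr_gt0.
have [m hm] := series_tail_small cga e40.
have e20 : 0 < e / 2 by rewrite divr_gt0.
have /cvgrPdist_le /(_ _ e20) := fin m.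
apply: filterS => h /=; rewrite sub0r normrN => hfin.
have cd : cvgn (series (d h)).
  exact: (abs_cvg (beta := fun n => ga n + ga n)).
have E : h^-1 * (limn (series (fun n => v n (h + x))) -
                 limn (series (fun n => v n x))) - W = limn (series (d h)).
  by rewrite /d (lim_series_comb h^-1 (cvv (h + x)) (cvv x) cvd).
rewrite distrC E.
have [ct ->] := series_shift m cd.
apply: le_trans (ler_normD _ _) _.
rewrite [e](splitr e); apply: lerD => //.
have [cgs _] := series_shift m cga.
apply: le_trans (abs_lim_le (beta := fun k => ga (k + m)%N + ga (k + m)%N) _ _) _.
- by move=> k; exact: dbound.
- exact: is_cvg_seriesD.
have -> : (fun k => ga (k + m)%N + ga (k + m)%N) =
   (fun k => ga (k + m)%N) + (fun k => ga (k + m)%N) by [].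
rewrite lim_seriesD //.
have hm' := le_trans (ler_norm _) hm.
rewrite [e / 2](splitr (e / 2)).
exact: lerD.
Qed.

End P6.
Section P7.
Variable R : realType.

Lemma series_schwartz (u : nat -> R -> R) (Lv : nat -> nat) (beta : nat -> R) :
  (forall n, schwartz (u n)) -> (forall n, PB (Lv n) (u n) (beta n)) ->
  (forall n, (n <= Lv n)%N) -> cvgn (series beta) ->
  schwartz (fun x => limn (series (fun n => u n x))) /\
  forall N, (forall n, (N <= Lv n)%N) ->
    PB N (fun x => limn (series (fun n => u n x))) (limn (series beta)).
Proof.
move=> su pu lv cb.
have Bc : forall p : nat * nat * nat, exists C : R, forall x : R,
    `|x ^+ p.1.2 * derive1n p.2 (u p.1.1) x| <= C.
  by move=> [[n b] g]; have [_ h] := su n; exact: h.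
have [B hB] := choice Bc.
pose al b g n := if (b <= Lv n)%N && (g <= Lv n)%N then beta n else B (n, b, g).
have hal b g n x : `|x ^+ b * derive1n g (u n) x| <= al b g n.
  rewrite /al; case: ifP => [/andP[h1 h2]|_]; first exact: pu.
  exact: (hB (n, b, g)).
have hal0 g n x : `|derive1n g (u n) x| <= al 0%N g n.
  by have := hal 0%N g n x; rewrite expr0 mul1r.
have cal b g : cvgn (series (al b g)).
  apply: (@series_eventually _ _ beta (maxn b g)) => // n hn.
  rewrite /al ifT //; apply/andP; split; apply: leq_trans (lv n).
    exact: leq_trans (leq_maxl b g) hn.
  exact: leq_trans (leq_maxr b g) hn.
pose Ug g := fun x => limn (series (fun n => derive1n g (u n) x)).
have dv g n y : derivable (derive1n g (u n)) y 1.
  by have [sm _] := su n; exact: sm.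
have F g x : derivable (Ug g) x 1 /\ derive1 (Ug g) x = Ug g.+1 x.
  have [h1 h2] := series_derive x (dv g) (hal0 g) (fun n y => hal0 g.+1 n y)
     (cal 0%N g) (cal 0%N g.+1).
  by split => //; rewrite h2.
have DU g : derive1n g (fun x => limn (series (fun n => u n x))) = Ug g.
  elim: g => // g IH; rewrite derive1nS IH; apply/funext => x.
  by have [_ ->] := F g x.
have bnd b g x : `|x ^+ b * Ug g x| <= limn (series (al b g)).
  rewrite /Ug -[_ * _]/(x ^+ b *: _) -lim_seriesZ.
    exact: (abs_lim_le (fun n => hal b g n x) (cal b g)).
  exact: (abs_cvg (fun n => hal0 g n x) (cal 0%N g)).
split.
  split; first by move=> g x; rewrite DU; have [] := F g x.
  by move=> b g; exists (limn (series (al b g))) => x; rewrite DU.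
move=> N hN b g x hb hg; rewrite DU.
have -> : beta = al b g.
  apply/funext => n; rewrite /al ifT //.
  by rewrite (leq_trans hb (hN n)) (leq_trans hg (hN n)).
exact: bnd.
Qed.

End P7.
Section P8.
Variable R : realType.
Implicit Types (f g : R -> R) (mu : (R -> R) -> R).

Lemma temp_zero mu : tempered mu -> mu (fun _ => 0) = 0.
Proof.
move=> [lin _].
have := lin 1 _ _ (schwartz_zero R) (schwartz_zero R).
have -> : (fun x : R => 1 * 0 + 0) = (fun _ => 0 : R).
  by apply/funext => x; rewrite mulr0 addr0.
rewrite mul1r => /eqP; rewrite -subr_eq0 opprD addrA subrr sub0r oppr_eq0.
by move/eqP.
Qed.

Lemma temp_add mu f g : tempered mu -> schwartz f -> schwartz g ->
  mu (fun x => f x + g x) = mu f + mu g.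
Proof.
move=> [lin _] sf sg; have := lin 1 _ _ sf sg.
have -> : (fun x : R => 1 * f x + g x) = (fun x => f x + g x).
  by apply/funext => x; rewrite mul1r.
by rewrite mul1r.
Qed.

Lemma schwartz_add f g : schwartz f -> schwartz g -> schwartz (fun x => f x + g x).
Proof.
move=> sf sg; have := schwartz_lin 1 sf sg.
have -> : (fun x : R => 1 * f x + g x) = (fun x => f x + g x).
  by apply/funext => x; rewrite mul1r.
by [].
Qed.

Lemma schwartz_scale (c : R) f : schwartz f -> schwartz (fun x => c * f x).
Proof.
move=> sf; have := schwartz_lin c sf (schwartz_zero R).
have -> : (fun x : R => c * f x + 0) = (fun x => c * f x).
  by apply/funext => x; rewrite addr0.
by [].
Qed.

Lemma temp_scale mu (c : R) f : tempered mu -> schwartz f ->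
  mu (fun x => c * f x) = c * mu f.
Proof.
move=> tm sf; have [lin _] := tm; have := lin c _ _ sf (schwartz_zero R).
have -> : (fun x : R => c * f x + 0) = (fun x => c * f x).
  by apply/funext => x; rewrite addr0.
by rewrite temp_zero // addr0.
Qed.

Lemma temp_bound mu : tempered mu -> exists (N : nat) (C : R), 0 <= C /\
  forall phi, schwartz phi -> forall M, PB N phi M -> `|mu phi| <= C * M.
Proof.
move=> [_ [N [C h]]]; exists N, (Num.max C 0); split; first by rewrite le_max lexx orbT.
move=> phi sphi M hM; apply: le_trans (h phi sphi M hM) _.
by apply: ler_wpM2r; [exact: PB_ge0 hM|rewrite le_max lexx].
Qed.

Lemma abs_between (a y b : R) : a <= y -> y <= b -> `|y| <= `|a| + `|b|.
Proof.
move=> ay yb; rewrite ler_norml; apply/andP; split.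
  apply: le_trans ay; rewrite lerNl.
  apply: le_trans (ler_norm (- a)) _; rewrite normrN lerDl.
  exact: normr_ge0.
apply: le_trans yb _; apply: le_trans (ler_norm _) _; rewrite lerDr.
exact: normr_ge0.
Qed.

Lemma path_bounded (T : R) X psi : 0 <= T -> path_C T X -> schwartz psi ->
  exists A, 0 <= A /\ forall t, t \in `[0, T] -> `|X t psi| <= A.
Proof.
move=> T0 [_ cX] spsi.
have c := cX psi spsi.
have [cM hcM hM] := EVT_max T0 c.
have [cm hcm hm] := EVT_min T0 c.
exists (`|X cm psi| + `|X cM psi|); split; first by rewrite addr_ge0.
by move=> t ht; apply: abs_between; [exact: hm|exact: hM].
Qed.

End P8.
Section P9.
Variable R : realType.

Lemma hump_step (T : R) X (G : R) : 0 < T -> path_C T X -> 0 <= G ->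
  (forall (N : nat) (C : R), 0 <= C -> exists t psi M,
     [/\ t \in `[0, T], schwartz psi, PB N psi M & C * M < `|X t psi|]) ->
  forall p : (R -> R) * nat * R * nat, exists q : (R -> R) * R * nat * R,
  schwartz p.1.1.1 -> 1 <= p.1.2 ->
  [/\ q.1.1.2 \in `[0, T], schwartz q.1.1.1,
      PB p.1.1.2 q.1.1.1 ((2^-1)^+p.2 / p.1.2),
      `|X q.1.1.2 p.1.1.1| + G + p.2%:R <= `|X q.1.1.2 q.1.1.1| &
      0 <= q.2 /\
      forall phi, schwartz phi -> forall M, PB q.1.2 phi M ->
        `|X q.1.1.2 phi| <= q.2 * M].
Proof.
move=> T0 pX G0 viol [[[F L] K] j] /=.
case: (pselect (schwartz F /\ 1 <= K)) => [[sF K1]|nh]; last first.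
  by exists ((fun _ => 0), 0, 0%N, 0) => sF K1; exfalso; apply: nh.
have [A [A0 hA]] := path_bounded (ltW T0) pX sF.
set w := (2^-1)^+j / K.
have w0 : 0 < w.
  by rewrite /w divr_gt0 ?exprn_gt0 ?invr_gt0 // (lt_le_trans ltr01 K1).
pose C0 := (A + G + j%:R + 1) / w.
have C00 : 0 <= C0 by rewrite /C0 divr_ge0 // ?(ltW w0) // !addr_ge0.
have [t [psi [M [ht spsi ppsi lt]]]] := viol L C0 C00.
have tX := pX.1 t ht.
have M0 := PB_ge0 ppsi.
have Mpos : 0 < M.
  rewrite lt_neqAle M0 andbT; apply/negP => /eqP M0'.
  have psi0 : psi = fun _ => 0.
    apply/funext => x; have := ppsi 0%N 0%N x isT isT.
    by rewrite -M0' expr0 mul1r normr_le0 => /eqP.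
  by move: lt; rewrite psi0 temp_zero // normr0 -M0' mulr0 ltxx.
have [N [C [C0' hC]]] := temp_bound tX.
exists ((fun y => (w / M) * psi y), t, N, C) => _ _ /=.
have c0 : 0 <= w / M by rewrite divr_ge0 // ltW.
split => //.
- exact: schwartz_scale.
- have := PB_scale (w / M) (schwartz_smooth spsi) ppsi.
  by rewrite ger0_norm // divfK // gt_eqF.
- rewrite temp_scale // normrM ger0_norm //.
  have e : w / M * (C0 * M) = A + G + j%:R + 1.
    by rewrite mulrCA divfK ?gt_eqF // divfK ?gt_eqF.
  apply: (@le_trans _ _ (w / M * (C0 * M))); last first.
    by apply: ler_wpM2l => //; exact: ltW.
  rewrite e; apply: (@le_trans _ _ (A + G + j%:R)).
    by rewrite !lerD2r; exact: hA.
  by rewrite lerDl.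
Qed.

End P9.
Section P10.
Variable R : realType.

Lemma tri3 (a b c : R) : `|b| <= `|a + b + c| + `|a| + `|c|.
Proof.
have E : b = (a + b + c) + (- a) + (- c).
  by lra.
have h1 := ler_normD ((a + b + c) + (- a)) (- c).
have h2 := ler_normD (a + b + c) (- a).
rewrite !normrN -E in h1.
rewrite !normrN in h2.
lra.
Qed.

End P10.

Section P10b.
Variable R : realType.

Lemma uniform_bound (T : R) X : 0 < T -> path_C T X ->
  exists (N : nat) (C : R), 0 <= C /\
  forall t, t \in `[0, T] -> forall psi, schwartz psi -> forall M,
    PB N psi M -> `|X t psi| <= C * M.
Proof.
move=> T0 pX; apply: contrapT => H.
have viol : forall (N : nat) (C : R), 0 <= C -> exists t psi M,
     [/\ t \in `[0, T], schwartz psi, PB N psi M & C * M < `|X t psi|].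
  move=> N C C0; apply: contrapT => nv; apply: H; exists N, C; split => //.
  move=> t ht psi spsi M hM; rewrite leNgt; apply/negP => lt; apply: nv.
  by exists t, psi, M.
have h0 : 0 < (2:R)^-1 by rewrite invr_gt0.
have h1 : (2:R)^-1 < 1 by rewrite invf_lt1 // ltr1n.
have hn : `|(2:R)^-1| < 1 by rewrite ger0_norm // ltW.
pose G := limn (series (geometric 1 (2:R)^-1)).
have cG : cvgn (series (geometric 1 (2:R)^-1)) := is_cvg_geometric_series hn.
have G0 : 0 <= G.
  rewrite /G (cvg_lim _ (cvg_geometric_series hn)) // mul1r invr_ge0 subr_ge0.
  exact: ltW.
have [stp Hstp] := choice (hump_step T0 pX G0 viol).
pose st := fix st (j : nat) : (R -> R) * nat * R :=
  if j is j'.+1 then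
    let s := st j' in let q := stp (s, j') in
    ((fun x => s.1.1 x + q.1.1.1 x), maxn (maxn s.1.2 q.1.2) j'.+1, s.2 + q.2)
  else ((fun _ => 0), 0%N, 1).
pose chi j := (stp (st j, j)).1.1.1.
pose tt j := (stp (st j, j)).1.1.2.
pose NN j := (stp (st j, j)).1.2.
pose CC j := (stp (st j, j)).2.
pose FF j := (st j).1.1.
pose LL j := (st j).1.2.
pose KK j := (st j).2.
have inv j : [/\ schwartz (FF j), 1 <= KK j & (j <= LL j)%N].
  elim: j => [|j [sF K1 Lj]]; first by split => //; exact: schwartz_zero.
  have [_ sc _ _ [C0 _]] := Hstp (st j, j) sF K1.
  split.
  - exact: schwartz_add.
  - by rewrite /KK /=; apply: le_trans K1 _; rewrite lerDl.
  - by rewrite /LL /= leq_maxr.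
have invS j : schwartz (FF j) by case: (inv j).
have invK j : 1 <= KK j by case: (inv j).
have Hj j := Hstp (st j, j) (invS j) (invK j).
have K0 j : 0 < KK j by apply: lt_le_trans ltr01 (invK j).
have Lmono j k : (LL j <= LL (j + k))%N.
  elim: k => [|k IH]; first by rewrite addn0.
  apply: leq_trans IH _; rewrite addnS /LL /=.
  exact: leq_trans (leq_maxl _ _) (leq_maxl _ _).
have Kmono j k : KK j <= KK (j + k)%N.
  elim: k => [|k IH]; first by rewrite addn0.
  apply: le_trans IH _; rewrite addnS.
  change (KK (j + k)%N <= KK (j + k)%N + CC (j + k)%N); rewrite lerDl.
  by have [_ _ _ _ [C0 _]] := Hj (j + k)%N.
have NL j : (NN j <= LL j.+1)%N.
  by rewrite /LL /=; exact: leq_trans (leq_maxr _ _) (leq_maxl _ _).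
have CK j : CC j <= KK j.+1.
  have [_ _ _ _ [C0 _]] := Hj j.
  by change (CC j <= KK j + CC j); rewrite lerDr ltW.
have FFe j : FF j = fun x => series (fun i => chi i x) j.
  elim: j => [|j IH].
    by apply/funext => x; rewrite /series /= big_geq.
  apply/funext => x; rewrite seriesSr.
  change (FF j x + chi j x = series (chi^~ x) j + chi j x).
  by rewrite IH.
pose beta n := (2:R)^-1 ^+ n / KK n.
have bge0 n : 0 <= beta n by rewrite /beta divr_ge0 ?exprn_ge0 // ?ltW.
have ble n : beta n <= geometric 1 (2:R)^-1 n.
  by rewrite /beta /= mul1r ler_pdivrMr // ler_peMr ?exprn_ge0 ?(ltW h0).
have cb : cvgn (series beta).
  by apply: (abs_cvg (beta := geometric 1 (2:R)^-1)) => // n; rewrite ger0_norm.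
have schi n : schwartz (chi n) by have [] := Hj n.
have pchi n : PB (LL n) (chi n) (beta n) by have [] := Hj n.
have Ln n : (n <= LL n)%N by have [] := inv n.
have [sU _] := series_schwartz schi pchi Ln cb.
set U := fun x => limn (series (fun n => chi n x)) in sU.
have [AU [AU0 hAU]] := path_bounded (ltW T0) pX sU.
pose j := (Num.trunc AU).+1.
have jA : AU < j%:R by exact: truncnS_gt.
have [ht _ _ hb [C0 hC]] := Hj j.
have tX := pX.1 _ ht.
have [ctail _] := series_shift j.+1 cb.
have [stail ptail] := series_schwartz (u := fun k => chi (k + j.+1)%N)
  (Lv := fun k => LL (k + j.+1)%N) (beta := fun k => beta (k + j.+1)%N)
  (fun k => schi _) (fun k => pchi _)
  (fun k => leq_trans (leq_addr _ _) (Ln _)) ctail.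
set tail := fun x => limn (series (fun k => chi (k + j.+1)%N x)) in stail ptail.
have ptN : PB (NN j) tail (limn (series (fun k => beta (k + j.+1)%N))).
  apply: ptail => k; apply: leq_trans (NL j) _.
  by rewrite addnC; exact: Lmono.
have Xtail : `|X (tt j) tail| <= G.
  apply: le_trans (hC _ stail _ ptN) _.
  rewrite -[_ * _]/(CC j *: _) -lim_seriesZ //; apply: lim_series_le => //.
    exact: is_cvg_seriesZ.
  move=> k; change (CC j * beta (k + j.+1)%N <= 1 * (2:R)^-1 ^+ k).
  rewrite mul1r /beta mulrA.
  apply: (@le_trans _ _ ((2:R)^-1 ^+ (k + j.+1)%N)).
    rewrite ler_pdivrMr // [X in _ <= X]mulrC ler_wpM2r ?exprn_ge0 ?(ltW h0) //.
    apply: le_trans (CK j) _; rewrite -addSnnS addnC addnS -addSn.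
    exact: Kmono.
  by apply: ler_wiXn2l; rewrite ?(ltW h0) ?(ltW h1) ?leq_addr.
have Ue : U = fun x => (fun y => FF j y + chi j y) x + tail x.
  apply/funext => x; rewrite /U /tail.
  have cx : cvgn (series (fun n => chi n x)).
    apply: (abs_cvg (beta := beta)) => // n.
    by have := pchi n 0%N 0%N x isT isT; rewrite expr0 mul1r.
  have [_ ->] := series_shift j.+1 cx.
  by rewrite seriesSr FFe.
have XU : X (tt j) U = X (tt j) (FF j) + X (tt j) (chi j) + X (tt j) tail.
  rewrite Ue temp_add //; last exact: schwartz_add.
  by rewrite temp_add.
have := hAU _ ht; rewrite XU => hU.
have := tri3 (X (tt j) (FF j)) (X (tt j) (chi j)) (X (tt j) tail).
move: hb Xtail jA hU; rewrite /FF /chi /tt.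
lra.
Qed.

End P10b.
Section P11.
Variable R : realType.

Lemma fin1 (Q : nat -> R -> Prop) :
  (forall k C C', C <= C' -> Q k C -> Q k C') -> (forall k, exists C, Q k C) ->
  forall N, exists C, forall k, (k <= N)%N -> Q k C.
Proof.
move=> mono ex; elim => [|N [C hC]].
  have [C hC] := ex 0%N; exists C => k; rewrite leqn0 => /eqP ->; exact: hC.
have [C' hC'] := ex N.+1; exists (Num.max C C') => k; rewrite leq_eqVlt.
case/orP => [/eqP ->|hk].
  by apply: mono hC'; rewrite le_max lexx orbT.
by apply: mono (hC k hk); rewrite le_max lexx.
Qed.

Lemma schwartz_fin (f : R -> R) N : schwartz f -> exists B, forall b g x,
  (b <= N)%N -> (g <= N)%N -> `|x ^+ b * derive1n g f x| <= B.
Proof.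
move=> [_ hf].
have inner b : exists C, forall g, (g <= N)%N ->
    forall x, `|x ^+ b * derive1n g f x| <= C.
  have [C hC] := fin1 (Q := fun g C => forall x : R, `|x ^+ b * derive1n g f x| <= C)
    (fun k C C' le h x => le_trans (h x) le) (fun g => hf b g) N.
  by exists C => g hg x; exact: hC.
have [B hB] := fin1 (Q := fun b C => forall g, (g <= N)%N ->
    forall x, `|x ^+ b * derive1n g f x| <= C)
  (fun k C C' le h g hg x => le_trans (h g hg x) le) inner N.
by exists B => b g x hb hg; apply: hB.
Qed.

Lemma mvt_w (f : R -> R) (x r1 r2 T B0 Bb : R) b : (forall y, derivable f y 1) ->
  (forall y, `|derive1 f y| <= B0) -> (forall y, `|y ^+ b * derive1 f y| <= Bb) ->
  r1 \in `[0, T] -> r2 \in `[0, T] ->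
  `|x ^+ b * (f (x - r1) - f (x - r2))| <= (1 + T) ^+ b * (B0 + Bb) * `|r1 - r2|.
Proof.
move=> df h0 hb.
wlog r21 : r1 r2 / r2 <= r1.
  move=> W; have [/W//|/ltW r12 h1 h2] := leP r2 r1.
  by rewrite -normrN -mulrN opprB distrC; apply: W.
move=> hr1 hr2.
have ab : x - r1 <= x - r2 by rewrite lerD2l lerN2.
have [c hc E] := @MVT_segment R f (derive1 f) (x - r1) (x - r2) ab
  (fun z _ => is_derive_derive1 (df z))
  (derivable_within_continuous (fun z _ => df z)).
have -> : f (x - r1) - f (x - r2) = - (derive1 f c * (r1 - r2)).
  by rewrite -opprB E; congr (- (_ * _)); lra.
rewrite mulrN normrN mulrA normrM; apply: ler_wpM2r => //.
move: hc; rewrite in_itv /= => /andP[c1 c2].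
move: hr1 hr2; rewrite !in_itv /= => /andP[r10 r1T] /andP[r20 r2T].
have xc0 : 0 <= x - c by rewrite subr_ge0 (le_trans c2) // lerBlDr lerDl.
have xcT : x - c <= T.
  by apply: le_trans r1T; rewrite lerBlDr addrC -lerBlDr.
apply: le_trans (pow_shift_mul_le x (x - c) _ b) _.
have -> : x - (x - c) = c by rewrite opprB addrCA subrr addr0.
have T0 : 0 <= T by exact: le_trans xcT.
apply: ler_pM.
- by rewrite exprn_ge0 // addr_ge0.
- by rewrite addr_ge0.
- by apply: lerXn2r; rewrite ?nnegrE ?addr_ge0 // lerD2l ger0_norm.
- exact: lerD.
Qed.

Lemma shift_lip (phi : R -> R) (T : R) (N : nat) : schwartz phi -> 0 <= T ->
  exists K, 0 <= K /\ forall t s, t \in `[0, T] -> s \in `[0, T] ->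
    PB N (fun y => -1 * phi (y - s) + phi (y - t)) (K * `|t - s|).
Proof.
move=> sphi T0; have sm := schwartz_smooth sphi.
have [B hB] := schwartz_fin N.+1 sphi.
have B0 : 0 <= B by exact: le_trans (hB 0%N 0%N 0 isT isT).
exists ((1 + T) ^+ N * (B + B)); split.
  by rewrite mulr_ge0 ?exprn_ge0 ?addr_ge0.
move=> t s ht hs b g x hb hg.
rewrite derive1n_lin; [|exact: smooth_shift|exact: smooth_shift].
rewrite !derive1n_shiftfun.
have -> : -1 * derive1n g phi (x - s) + derive1n g phi (x - t) =
          derive1n g phi (x - t) - derive1n g phi (x - s).
  by rewrite mulN1r addrC.
apply: le_trans (mvt_w x (T := T) (B0 := B) (Bb := B) _ _ _ ht hs) _.
- by move=> y; exact: sm.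
- move=> y; have := hB 0%N g.+1 y isT hg; rewrite expr0 mul1r.
  by rewrite derive1nS.
- move=> y; have := hB b g.+1 y (leq_trans hb (leqnSn N)) hg.
  by rewrite derive1nS.
apply: ler_wpM2r => //; apply: ler_wpM2r; first by rewrite addr_ge0.
apply: ler_weXn2l => //; rewrite lerDl.
by move: ht; rewrite in_itv /= => /andP[t0 /(le_trans t0)].
Qed.

End P11.
Theorem proposition3 (R : realType) (T : R) (hT : 0 < T) :
  (forall X, path_C T X -> path_C T (G X)) /\ continuous_C T (@G R).
Proof.
have T0 := ltW hT.
split.
  move=> X pX; split.
    move=> t ht; have tX := pX.1 t ht; split.
      move=> a phi psi sphi spsi; rewrite /G /tau.
      exact: tX.1 a _ _ (schwartz_shift t sphi) (schwartz_shift t spsi).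
    have [N [C [C0 hC]]] := temp_bound tX.
    exists N, (C * ((1 + `|t|) ^+ N * 2)) => phi sphi M hM.
    rewrite /G /tau.
    have := hC _ (schwartz_shift t sphi) _
      (PB_shift t (schwartz_smooth sphi) hM).
    have -> : C * ((1 + `|t|) ^+ N * (M + M)) = C * ((1 + `|t|) ^+ N * 2) * M.
      by ring.
    by [].
  move=> phi sphi.
  have [N [C [C0 hC]]] := uniform_bound hT pX.
  have [K [K0 hK]] := shift_lip N sphi T0.
  apply/subspace_continuousP => s /= hs.
  have c1 := (subspace_continuousP _ _).1 (pX.2 _ (schwartz_shift s sphi)) s hs.
  apply/cvgrPdist_le => e e0.
  have e2 : 0 < e / 2 by rewrite divr_gt0.
  have /cvgrPdist_le /(_ _ e2) H1 := c1.
  pose d := e / 2 / (C * K + 1).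
  have CK0 : 0 <= C * K by rewrite mulr_ge0.
  have d0 : 0 < d by rewrite /d divr_gt0 // ltr_wpDl.
  have /cvgrPdist_lt /(_ _ d0) H2 := @cvg_id _ (nbhs s).
  rewrite near_withinE in H1 *.
  apply: filterS2 H1 H2 => t h1 h2 At.
  have ht : t \in `[0, T] by exact: At.
  have hs' : s \in `[0, T] by exact: hs.
  have tX := pX.1 t ht.
  have lin := tX.1 (-1) _ _ (schwartz_shift s sphi) (schwartz_shift t sphi).
  have b := hC t ht _ (schwartz_lin (-1) (schwartz_shift s sphi) (schwartz_shift t sphi)) _
    (hK t s ht hs').
  have h1' := h1 At.
  rewrite lin in b.
  have dd : C * (K * `|t - s|) <= e / 2.
    rewrite mulrA; apply: (@le_trans _ _ ((C * K + 1) * d)).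
      apply: ler_pM => //; first by rewrite lerDl.
      by rewrite distrC ltW.
    by rewrite /d mulrC divfK // gt_eqF // ltr_wpDl.
  rewrite -normrN opprD mulN1r opprK in b.
  have tri := ler_distD (X t (tau_fun s phi)) (X s (tau_fun s phi)) (X t (tau_fun t phi)).
  move: b h1' dd tri; rewrite /from_subspace /G /tau /tau_fun /=.
  lra.
move=> X pX B eps [BS Bb] eps0.
exists [set psi | exists t phi, [/\ t \in `[0, T], B phi & psi = tau_fun t phi]], eps.
split; last split => //.
  split.
    by move=> psi [t [phi [_ Bphi ->]]]; apply: schwartz_shift; exact: BS.
  move=> b g.
  have [C1 h1] := Bb 0%N g; have [C2 h2] := Bb b g.
  exists ((1 + T) ^+ b * (C1 + C2)) => psi [t [phi [ht Bphi ->]]] x.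
  rewrite /tau_fun derive1n_shiftfun; last first.
  apply: le_trans (pow_shift_mul_le x t _ b) _.
  have hC1 := h1 phi Bphi (x - t); rewrite expr0 mul1r in hC1.
  have hC2 := h2 phi Bphi (x - t).
  apply: ler_pM.
  - by rewrite exprn_ge0 // addr_ge0.
  - by rewrite addr_ge0.
  - apply: lerXn2r; rewrite ?nnegrE ?addr_ge0 // lerD2l.
    by move: ht; rewrite in_itv /= => /andP[t0 tT]; rewrite ger0_norm.
  - exact: lerD.
move=> Y pY hY t phi ht Bphi; rewrite /G /tau.
apply: hY => //; by exists t, phi.
Qed.
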